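(* For every integer $n$ and every integer $r$ with $3\le r\le n-2$, $A(n,r-1)\,(A(n,r-1)-1) > 2A(n,3r-2)$.
   Context: $A(n,q)$ is the Eulerian number, the number of permutations of $\{1,\dots,n\}$ with exactly $q$ ascents, with the convention $A(n,q)=0$ if $q\ge n$. *)

(* Defs.v *)
From mathcomp Require Import all_boot all_order all_fingroup.
Set Implicit Arguments. Unset Strict Implicit. Unset Printing Implicit Defensive.

Definition ascents (n : nat) (s : 'S_n) : nat :=
  #|[set i : 'I_n | [exists j : 'I_n, (val j == (val i).+1) && (s i < s j)]]|.

Definition eulerian (n q : nat) : nat :=
  #|[set s : 'S_n | ascents s == q]|.

(* Main.v *)
Require Import Defs.
From Stdlib Require Import NArith Lia.
From mathcomp Require Import all_boot all_order all_fingroup.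
From mathcomp Require Import zify.
Set Implicit Arguments. Unset Strict Implicit. Unset Printing Implicit Defensive.


Fixpoint eul (n k : nat) : nat :=
  match n with
  | 0 => (k == 0)
  | n'.+1 => k.+1 * eul n' k + (match k with 0 => 0 | k'.+1 => (n' - k') * eul n' k' end)
  end.

Lemma eul_gt n k : n < k -> eul n k = 0.
Proof.
elim: n k => [|n IH] [|k] //= H.
rewrite IH ?(ltnW H) // muln0 add0n.
have -> : n - k = 0 by lia.
by rewrite mul0n.
Qed.

Lemma eul_diag n : 0 < n -> eul n n = 0.
Proof.
case: n => // n _ /=. rewrite eul_gt // subnn. by rewrite muln0.
Qed.

Lemma eul_ge n k : 0 < n -> n <= k -> eul n k = 0.
Proof.
move=> H; rewrite leq_eqVlt => /orP [/eqP <-|]; [exact: eul_diag | exact: eul_gt].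
Qed.

Lemma eulSS n k : eul n.+1 k.+1 = k.+2 * eul n k.+1 + (n - k) * eul n k.
Proof. by []. Qed.

Lemma eul_sub1 n : eul n.+1 n = 1.
Proof.
elim: n => [//|n IH].
rewrite eulSS eul_diag // muln0 add0n.
have -> : n.+1 - n = 1 by lia.
by rewrite mul1n.
Qed.

Lemma eul_step n k : k.+1 * eul n k <= eul n.+1 k.
Proof. by rewrite /= leq_addr. Qed.

Lemma eul_pow_lb n m k : k.+1 ^ m * eul n k <= eul (m + n) k.
Proof.
elim: m => [|m IH]; first by rewrite expn0 mul1n.
rewrite expnS -mulnA addSn. apply: leq_trans (eul_step _ _).
by rewrite leq_mul2l IH orbT.
Qed.

Lemma bin_id x n j : j < n ->
  x * 'C(x + (n - j.+1), n) = (n - j) * 'C(x + (n - j.+1), n.+1)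
                             + j.+1 * 'C((x + (n - j.+1)).+1, n.+1).
Proof.
move=> Hj. set y := x + (n - j.+1).
rewrite binS mulnDr addnA -mulnDl.
have -> : n - j + j.+1 = n.+1 by lia.
rewrite mul_bin_left -mulnDl.
case: (leqP n y) => Hy.
  congr (_ * _). rewrite /y. lia.
by rewrite bin_small // !muln0.
Qed.

Lemma eulS m j : eul m.+1 j = j.+1 * eul m j + (if j is k.+1 then (m - k) * eul m k else 0).
Proof. by []. Qed.

Lemma worp_step m x : 0 < m ->
  x ^ m = \sum_(j < m) eul m j * 'C(x + (m - j.+1), m) ->
  x ^ m.+1 = \sum_(j < m.+1) eul m.+1 j * 'C(x + (m.+1 - j.+1), m.+1).
Proof.
move=> Hm IH.
rewrite expnS IH big_distrr.
rewrite (eq_bigr (fun j : 'I_m => eul m j * ((m - j) * 'C(x + (m - j.+1), m.+1))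
     + eul m j * (j.+1 * 'C(x + (m - j), m.+1)))); last first.
  move=> j _.
  have E := bin_id x (ltn_ord j).
  have E2 : (x + (m - j.+1)).+1 = x + (m - j) by have := ltn_ord j; lia.
  rewrite E2 in E.
  change (x * (eul m j * 'C(x + (m - j.+1), m)) = eul m j * ((m - j) * 'C(x + (m - j.+1), m.+1))
     + eul m j * (j.+1 * 'C(x + (m - j), m.+1))).
  by rewrite mulnCA E mulnDr.
rewrite big_split /= addnC.
rewrite (eq_bigr (fun j : 'I_m.+1 => j.+1 * eul m j * 'C(x + (m - j), m.+1) +
   (if nat_of_ord j is k.+1 then (m - k) * eul m k else 0) * 'C(x + (m.+1 - j.+1), m.+1))); last first.
  by move=> j _; rewrite mulnDl subSS.
rewrite big_split /=.
congr (_ + _).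
  rewrite big_ord_recr /= eul_diag // muln0 mul0n addn0.
  by apply: eq_bigr => j _; rewrite mulnCA mulnA.
rewrite big_ord_recl /= mul0n add0n.
apply: eq_bigr => j _. rewrite /bump /= add1n subSS.
by rewrite mulnCA mulnA.
Qed.

Lemma worp n x : 0 < n ->
  x ^ n = \sum_(j < n) eul n j * 'C(x + (n - j.+1), n).
Proof.
elim: n => [//|n IH] _.
case: n IH => [|n] IH.
  by rewrite big_ord1 /= subnn addn0 bin1 expn1 !mul1n addn0.
exact: worp_step (IH isT).
Qed.

Lemma eul_ub n k : eul n k <= k.+1 ^ n.
Proof.
case: n => [|n]; first by case: k.
case: (leqP n.+1 k) => Hk; first by rewrite eul_ge.
rewrite (worp k.+1 (isT : 0 < n.+1)).
rewrite (bigD1 (Ordinal Hk)) //=.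
have -> : k.+1 + (n.+1 - k.+1) = n.+1 by lia.
by rewrite binn muln1 leq_addr.
Qed.

Fixpoint asc (l : seq nat) : nat :=
  match l with
  | x :: ((y :: _) as t) => (x < y) + asc t
  | _ => 0
  end.

Definition ins (l : seq nat) p m := take p l ++ m :: drop p l.

Fixpoint B (l : seq nat) : seq bool :=
  match l with
  | [::] => [:: false]
  | x :: t => match t with
              | [::] => [:: false; true]
              | y :: _ => false :: ~~ (x < y) :: behead (B t)
              end
  end.

Lemma asc_ins m l p : all (fun x => x < m) l -> p <= size l ->
  asc (ins l p m) = asc l + nth false (B l) p.
Proof.
elim: l p => [|x t IH] p /=.
  by move=> _; rewrite leqn0 => /eqP ->.
case/andP=> xm Hall.
case: t IH Hall => [|y t] IH Hall.
  case: p => [|[|p]] //= _.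
    by rewrite /ins /= ltnNge (ltnW xm).
  by rewrite /ins /= xm.
case: p => [|[|p]] Hp.
- rewrite /ins /= ltnNge (ltnW xm) /=. by rewrite addn0.
- rewrite /ins /= xm.
  move: Hall => /andP [ym _].
  rewrite ltnNge (ltnW ym) /=. by case: (x < y); rewrite /= ?addn0 ?addn1 ?add1n.
- have := IH p.+1 Hall Hp.
  rewrite /ins /= => ->.
  by rewrite nth_behead addnA.
Qed.

Lemma size_B l : size (B l) = (size l).+1.
Proof.
elim: l => [|x t IH] //=.
case: t IH => [|y t] //= IH.
by rewrite size_behead IH.
Qed.

Lemma head_B l : nth false (B l) 0 = false.
Proof. by case: l => [|x [|y t]]. Qed.

Lemma asc_le l : asc l <= (size l).-1.
Proof.
elim: l => [|x t IH] //=.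
case: t IH => [|y t] //= IH.
by move: IH; case: (x < y); rewrite /= ?add0n ?add1n; case: t => [|z t] /=; lia.
Qed.

Lemma count_B l : count id (B l) = size l - asc l.
Proof.
elim: l => [|x t IH] //=.
case: t IH => [|y t] //= IH.
have -> : count id (behead (B (y :: t))) = count id (B (y :: t)).
  move: (head_B (y :: t)). case: (B (y :: t)) => [|b s] //= ->. by [].
rewrite IH.
have := asc_le (y :: t). rewrite /=.
case: (x < y) => /=; lia.
Qed.

Lemma count_bool_add a k (s : seq bool) :
  count (fun b : bool => a + b == k) s = (a == k) * count negb s + (a.+1 == k) * count id s.
Proof.
elim: s => [|b s IH] /=; first by rewrite !muln0.
rewrite IH. case: b => /=; rewrite ?addn0 ?addn1; lia.
Qed.

Lemma count_ins m l k : all (fun x => x < m) l ->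
  count (fun p => asc (ins l p m) == k) (iota 0 (size l).+1)
  = (asc l == k) * (asc l).+1 + ((asc l).+1 == k) * (size l - asc l).
Proof.
move=> Hall.
rewrite (@eq_in_count _ _ (fun p => asc l + nth false (B l) p == k)); last first.
  move=> p; rewrite mem_iota add0n ltnS => Hp. by rewrite asc_ins.
rewrite -size_B.
have -> : count (fun p => asc l + nth false (B l) p == k) (iota 0 (size (B l)))
   = count (fun b : bool => asc l + b == k) (B l).
  by rewrite -{3}(mkseq_nth false (B l)) /mkseq count_map.
rewrite count_bool_add count_B.
have := count_predC id (B l). rewrite size_B count_B.
have := asc_le l.
move=> H1 H2.
have -> : count negb (B l) = (asc l).+1.
  have -> : count negb (B l) = count (predC id) (B l) by [].
  lia.
by [].
Qed.

Definition P n := permutations (iota 0 n).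
Definition Ins n := [seq ins l p n | l <- P n, p <- iota 0 n.+1].

Lemma inP n l : (l \in P n) = perm_eq l (iota 0 n).
Proof. by rewrite /P mem_permutations. Qed.

Lemma P_props n l : l \in P n -> [/\ size l = n, n \notin l & all (fun x => x < n) l].
Proof.
rewrite inP => H.
split.
- by rewrite (perm_size H) size_iota.
- by rewrite (perm_mem H) mem_iota ltnn andbF.
- apply/allP => x. by rewrite (perm_mem H) mem_iota.
Qed.

Lemma ins_perm n l p : l \in P n -> perm_eq (ins l p n) (iota 0 n.+1).
Proof.
rewrite inP => H.
have E : iota 0 n.+1 = rcons (iota 0 n) n by rewrite -cats1 -addn1 iotaD.
rewrite /ins -cat1s perm_catCA cat1s cat_take_drop E.
by rewrite perm_sym perm_rcons perm_cons perm_sym.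
Qed.

Lemma ins_inj n l1 l2 p1 p2 : n \notin l1 -> n \notin l2 ->
  p1 <= size l1 -> p2 <= size l2 -> ins l1 p1 n = ins l2 p2 n -> l1 = l2 /\ p1 = p2.
Proof.
move=> n1 n2 s1 s2 E.
have Hp : p1 = p2.
  have := congr1 (index n) E.
  rewrite /ins !index_cat.
  have -> : (n \in take p1 l1) = false by apply/negbTE; apply: contra n1; exact: mem_take.
  have -> : (n \in take p2 l2) = false by apply/negbTE; apply: contra n2; exact: mem_take.
  by rewrite !size_takel //= eqxx !addn0.
subst p2; split => //.
move/eqP: E; rewrite /ins eqseq_cat; last by rewrite !size_takel.
case/andP => /eqP E1 /eqP [E2].
by rewrite -(cat_take_drop p1 l1) E1 E2 cat_take_drop.
Qed.

Lemma uniq_Ins n : uniq (Ins n).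
Proof.
apply: allpairs_uniq; [exact: permutations_uniq | exact: iota_uniq |].
move=> [l1 p1] [l2 p2] H1 H2 /= E.
case/allpairsP: H1 => [[a1 b1] [/= Ha1 Hb1 [E11 E12]]].
case/allpairsP: H2 => [[a2 b2] [/= Ha2 Hb2 [E21 E22]]].
subst l1 p1 l2 p2.
have [sa1 na1 _] := P_props Ha1.
have [sa2 na2 _] := P_props Ha2.
move: Hb1 Hb2; rewrite !inE !mem_iota => Hb1 Hb2.
have Hs1 : b1 <= size a1 by rewrite sa1; lia.
have Hs2 : b2 <= size a2 by rewrite sa2; lia.
by have [-> ->] := ins_inj na1 na2 Hs1 Hs2 E.
Qed.

Lemma perm_Ins n : perm_eq (Ins n) (P n.+1).
Proof.
have sub : {subset Ins n <= P n.+1}.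
  move=> z /allpairsP [[l p] [/= Hl Hp ->]].
  by rewrite inP ins_perm.
have Hsz : size (P n.+1) <= size (Ins n).
  rewrite /Ins size_allpairs /P !size_permutations ?iota_uniq // !size_iota.
  by rewrite factS mulnC.
have [Hs Hi] := uniq_min_size (uniq_Ins n) sub Hsz.
apply: uniq_perm; [exact: uniq_Ins | exact: permutations_uniq | exact: Hi].
Qed.

Definition cnt n k := count (fun l => asc l == k) (P n).

Lemma count_allpairs (f : seq nat -> nat -> seq nat) (a : pred (seq nat)) s t :
  count a [seq f x y | x <- s, y <- t] = sumn [seq count a [seq f x y | y <- t] | x <- s].
Proof.
elim: s => [|x s IH] //=.
by rewrite count_cat IH.
Qed.

Lemma cnt_rec n k : cnt n.+1 k = k.+1 * cnt n k + (if k is k'.+1 then (n - k') * cnt n k' else 0).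
Proof.
rewrite /cnt -(seq.permP (perm_Ins n)) /Ins count_allpairs.
have E : forall L : seq (seq nat), {subset L <= P n} ->
   sumn [seq count (fun l0 => asc l0 == k) [seq ins x y n | y <- iota 0 n.+1] | x <- L]
   = k.+1 * count (fun l => asc l == k) L + (if k is k'.+1 then (n - k') * count (fun l => asc l == k') L else 0).
  have sc : forall a s, sumn (a :: s) = a + sumn s by [].
  have cc : forall (a : pred (seq nat)) y s, count a (y :: s) = a y + count a s by [].
  elim => [|x L IH] HL; first by case: k => [|k] /=; rewrite ?muln0.
  rewrite map_cons sc.
  rewrite IH; last by move=> y Hy; apply: HL; rewrite inE Hy orbT.
  have Hx : x \in P n by apply: HL; rewrite inE eqxx.
  have [sx nx ax] := P_props Hx.
  rewrite count_map.
  have := count_ins k ax. rewrite sx /preim => ->.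
  rewrite !cc.
  have := asc_le x. rewrite sx.
  clear IH HL.
  case: k => [|k].
    move: (asc x) (count _ L) => a c1. lia.
  rewrite cc. move: (asc x) (count (fun l => asc l == k.+1) L) (count (fun l => asc l == k) L) => a c1 c2. lia.
exact: E.
Qed.

Lemma cnt_eul n k : cnt n k = eul n k.
Proof.
elim: n k => [|n IH] k; first by case: k.
by rewrite cnt_rec eulS; case: k => [|k]; rewrite !IH.
Qed.

Lemma card_count (T : finType) (p : pred T) : #|[set x | p x]| = count p (enum T).
Proof. rewrite cardsE cardE /enum_mem size_filter -enumT. by elim: (enum T) => //= x s ->. Qed.

Lemma asc_count l : asc l = count (fun i => nth 0 l i < nth 0 l i.+1) (iota 0 (size l).-1).
Proof.
elim: l => [|x t IH] //.
case: t IH => [|y t] IH //.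
rewrite -[asc (x :: y :: t)]/((x < y) + asc (y :: t)) IH.
rewrite /= (iotaDl 1 0) count_map. by [].
Qed.

Definition tol n (s : 'S_n) : seq nat := [seq val (s i) | i <- enum 'I_n].

Lemma size_tol n (s : 'S_n) : size (tol s) = n.
Proof. by rewrite size_map size_enum_ord. Qed.

Lemma nth_tol n (s : 'S_n) (i : 'I_n) : nth 0 (tol s) i = s i.
Proof.
by rewrite /tol (nth_map i) ?nth_ord_enum // size_enum_ord.
Qed.

Lemma count_shift n (g : nat -> bool) :
  count (fun i => (i.+1 < n) && g i) (iota 0 n) = count g (iota 0 n.-1).
Proof.
case: n => [|m] //.
rewrite -addn1 iotaD count_cat /= add0n addn1 ltnn andFb addn0.
rewrite addn0 /=. apply: eq_in_count => i; rewrite mem_iota add0n => Hi.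
by rewrite ltnS; case/andP: Hi => _ ->.
Qed.

Lemma ascents_tol n (s : 'S_n) : ascents s = asc (tol s).
Proof.
rewrite /ascents card_count asc_count size_tol.
set F := (fun i => (i.+1 < n) && (nth 0 (tol s) i < nth 0 (tol s) i.+1)).
have E1 : count (fun i : 'I_n => [exists j : 'I_n, (val j == (val i).+1) && (s i < s j)]) (enum 'I_n)
   = count (preim val F) (enum 'I_n).
  apply: eq_count => i /=. rewrite /F.
  apply/existsP/andP.
    case=> j /andP [/eqP Hj Hlt].
    split; first by rewrite -Hj.
    by rewrite -Hj !nth_tol.
  case=> Hi Hlt.
  exists (Ordinal Hi). rewrite /= eqxx /=.
  by move: Hlt; rewrite -(nth_tol s (Ordinal Hi)) nth_tol.
rewrite E1 -count_map val_enum_ord /F.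
exact: count_shift.
Qed.

Lemma tol_inj n : injective (@tol n).
Proof.
move=> s1 s2 E. apply/permP => i.
have := congr1 (fun l => nth 0 l i) E. rewrite /= !nth_tol => H.
exact: val_inj H.
Qed.

Lemma tol_in n (s : 'S_n) : tol s \in P n.
Proof.
rewrite inP /tol -val_enum_ord.
have -> : [seq val (s i) | i <- enum 'I_n] = map val (map s (enum 'I_n)) by elim: (enum _) => //= ? ? ->.
apply: perm_map.
apply: uniq_perm; first by rewrite (map_inj_uniq (@perm_inj _ s)) enum_uniq.
  exact: enum_uniq.
move=> x. rewrite mem_enum. apply/mapP. exists ((s^-1)%g x); first by rewrite mem_enum.
by rewrite permKV.
Qed.

Lemma perm_tol n : perm_eq (map (@tol n) (enum 'S_n)) (P n).
Proof.
have U : uniq (map (@tol n) (enum 'S_n)) by rewrite (map_inj_uniq (@tol_inj n)) enum_uniq.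
have sub : {subset map (@tol n) (enum 'S_n) <= P n}.
  by move=> l /mapP [s _ ->]; exact: tol_in.
have Hsz : size (P n) <= size (map (@tol n) (enum 'S_n)).
  by rewrite size_map -cardT card_Sn /P size_permutations ?iota_uniq // size_iota.
have [_ Hi] := uniq_min_size U sub Hsz.
apply: uniq_perm => //. exact: permutations_uniq.
Qed.

Lemma eulerian_eul n k : eulerian n k = eul n k.
Proof.
rewrite -cnt_eul /eulerian card_count /cnt -(seq.permP (perm_tol n)) [RHS]count_map.
apply: eq_count => s /=. by rewrite ascents_tol.
Qed.

Definition nextrow (n : nat) (r : seq N) : seq N :=
  [seq N.add (N.mul (N.of_nat k.+1) (nth 0%num r k))
         (if k is k'.+1 then N.mul (N.of_nat (n - k')) (nth 0%num r k') else 0%num)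
  | k <- iota 0 n.+2].

Fixpoint rowN (n : nat) : seq N :=
  match n with 0 => [:: 1%num] | n'.+1 => nextrow n' (rowN n') end.

Lemma size_rowN n : size (rowN n) = n.+1.
Proof. by case: n => [|n] //=; rewrite size_map size_iota. Qed.

Lemma rowN_eul n k : nth 0%num (rowN n) k = N.of_nat (eul n k).
Proof.
elim: n k => [|n IH] k.
  by case: k => [|[|k]].
rewrite [rowN _]/= /nextrow.
case: (ltnP k n.+2) => Hk.
  rewrite (nth_map 0) ?size_iota // nth_iota // add0n eulS.
  case: k Hk => [|k] Hk; rewrite !IH; lia.
rewrite nth_default ?size_map ?size_iota // eul_gt //.
Qed.

Fixpoint allrows (n : nat) : seq (seq N) :=
  match n with
  | 0 => [:: rowN 0]
  | n'.+1 => let rs := allrows n' in nextrow n' (head [::] rs) :: rs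
  end.

Lemma head_allrows n : head [::] (allrows n) = rowN n.
Proof. by elim: n => [|n IH] //=; rewrite IH. Qed.

Lemma allrows_nth n j : j <= n -> nth [::] (allrows n) j = rowN (n - j).
Proof.
elim: n j => [|n IH] j.
  by rewrite leqn0 => /eqP ->.
case: j => [|j] Hj.
  by rewrite subn0 /= head_allrows.
by rewrite /= IH.
Qed.

Definition testA (rs : seq (seq N)) (a : nat) : bool :=
  let x := nth 0%num (nth [::] rs (89 - (3 * a + 2))) a in
  N.ltb (N.mul 2 (N.pow (N.of_nat (3 * a + 2)) (N.of_nat (3 * a + 2)))) (N.mul x (N.sub x 1)).

Lemma compcheck : all (testA (allrows 89)) (iota 3 27) = true.
Proof. vm_compute. reflexivity. Qed.

Lemma Nof_pow b e : N.of_nat (b ^ e) = N.pow (N.of_nat b) (N.of_nat e).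
Proof.
elim: e => [|e IH]; first by rewrite expn0.
by rewrite expnS Nat2N.inj_succ N.pow_succ_r' -IH mulnE Nat2N.inj_mul.
Qed.

Lemma Nof_mul a b : N.of_nat (a * b) = N.mul (N.of_nat a) (N.of_nat b).
Proof. by rewrite mulnE Nat2N.inj_mul. Qed.

Lemma Nof_sub a b : N.of_nat (a - b) = N.sub (N.of_nat a) (N.of_nat b).
Proof. by rewrite subnE Nat2N.inj_sub. Qed.

Lemma Nle_nat p q : N.leb (N.of_nat p) (N.of_nat q) = true -> p <= q.
Proof. move/N.leb_le => H. apply/leP. lia. Qed.

Lemma Nle_pow b1 e1 b2 e2 :
  N.leb (N.pow (N.of_nat b1) (N.of_nat e1)) (N.pow (N.of_nat b2) (N.of_nat e2)) = true ->
  b1 ^ e1 <= b2 ^ e2.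
Proof. move=> H. apply: Nle_nat. by rewrite !Nof_pow. Qed.

Lemma pow_base : 27 ^ 31 <= 31 ^ 30.
Proof. apply: (@Nle_pow 27 31 31 30). by vm_compute. Qed.

Lemma Nlt_nat p q : N.ltb (N.of_nat p) (N.of_nat q) = true -> p < q.
Proof. move/N.ltb_lt => H. apply/ltP. lia. Qed.

Lemma transfer x y : N.ltb (N.mul 2 (N.of_nat y)) (N.mul (N.of_nat x) (N.sub (N.of_nat x) 1)) = true ->
  2 * y < x * (x - 1).
Proof.
move=> H; apply: Nlt_nat. by rewrite !Nof_mul Nof_sub.
Qed.

Lemma mid_cases a : 3 <= a -> a <= 29 ->
  2 * (3 * a + 2) ^ (3 * a + 2) < eul (3 * a + 2) a * (eul (3 * a + 2) a - 1).
Proof.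
move=> H1 H2.
have : a \in iota 3 27 by rewrite mem_iota; apply/andP; split => //; lia.
move/(allP compcheck). rewrite /testA allrows_nth; last by lia.
have -> : 89 - (89 - (3 * a + 2)) = 3 * a + 2 by lia.
rewrite rowN_eul -Nof_pow => H.
exact: transfer H.
Qed.

Lemma a2_8 : 2 * eul 8 7 < eul 8 2 * (eul 8 2 - 1).
Proof. apply: transfer. rewrite -!rowN_eul. by vm_compute. Qed.

Lemma a2_9 : 2 * eul 9 7 < eul 9 2 * (eul 9 2 - 1).
Proof. apply: transfer. rewrite -!rowN_eul. by vm_compute. Qed.

Lemma a2_10 : 2 * 8 ^ 10 < eul 10 2 * (eul 10 2 - 1).
Proof. apply: transfer. rewrite Nof_pow -!rowN_eul. by vm_compute. Qed.

Lemma xx1_mono x y : x <= y -> x * (x - 1) <= y * (y - 1).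
Proof. move=> H. by rewrite leq_mul // leq_sub2r. Qed.

Lemma big27 a : 30 <= a -> 27 ^ a.+1 <= a.+1 ^ a.
Proof.
move=> Ha. rewrite -(subnK Ha).
elim: (a - 30) => [|m IH]; first exact: pow_base.
rewrite !addSn expnS.
apply: (@leq_trans ((m + 30).+2 * (m + 30).+1 ^ (m + 30))).
  rewrite leq_mul //; lia.
rewrite [X in _ <= X]expnS leq_mul2l; apply/orP; right.
by rewrite leq_exp2r ?addn_gt0 ?orbT.
Qed.

Lemma large_base a : 30 <= a ->
  2 * (3 * a + 2) ^ (3 * a + 2) < eul (3 * a + 2) a * (eul (3 * a + 2) a - 1).
Proof.
move=> Ha.
have HX : a.+1 ^ (2 * a + 1) <= eul (3 * a + 2) a.
  have := eul_pow_lb a.+1 (2 * a + 1) a.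
  rewrite eul_sub1 muln1.
  by have -> : 2 * a + 1 + a.+1 = 3 * a + 2 by lia.
apply: leq_trans (xx1_mono HX).
set L := a.+1 ^ (2 * a + 1).
set C := 3 ^ (3 * a + 2).
set D := a.+1 ^ (3 * a + 2).
have h1 : (3 * a + 2) ^ (3 * a + 2) <= C * D.
  rewrite /C /D -expnMn leq_exp2r; lia.
have h2 : L * L = D * a.+1 ^ a.
  by rewrite /L /D -!expnD; congr (_ ^ _); lia.
have h3 : 3 * C <= a.+1 ^ a.
  rewrite /C -expnS (_ : (3 * a + 2).+1 = 3 * a.+1); last by lia.
  rewrite expnM. exact: big27.
have h4 : L < D.
  by rewrite /L /D ltn_exp2l //; lia.
have h5 : 1 <= C by rewrite expn_gt0.
set A := (3 * a + 2) ^ (3 * a + 2) in h1 *.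
have h6 : 3 * (C * D) <= L * L by rewrite h2 mulnA mulnC leq_mul2l h3 orbT.
nia.
Qed.

Lemma induct a n0 m : 2 <= a ->
  2 * (3 * a + 2) ^ n0 < eul n0 a * (eul n0 a - 1) ->
  2 * (3 * a + 2) ^ (m + n0) < eul (m + n0) a * (eul (m + n0) a - 1).
Proof.
move=> Ha H0.
elim: m => [|m IH] //.
have Hs := eul_step (m + n0) a.
rewrite addSn expnS.
move: IH Hs.
move: (eul (m + n0) a) (eul (m + n0).+1 a) ((3 * a + 2) ^ (m + n0)) => X Y P IH Hs.
apply: leq_trans (xx1_mono Hs).
have h1 : a.+1 * X * (a.+1 * (X - 1)) <= a.+1 * X * (a.+1 * X - 1).
  rewrite leq_mul2l; apply/orP; right. rewrite mulnBr muln1 leq_sub2l //.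
have h2 : (3 * a + 2) <= a.+1 * a.+1.
  have : 2 * a <= a * a by rewrite leq_mul2r Ha orbT.
  lia.
apply: leq_trans h1.
move: IH; move: (X - 1) => W IH.
nia.
Qed.

Lemma key a n : 2 <= a -> 3 * a + 2 <= n ->
  2 * eul n (3 * a + 1) < eul n a * (eul n a - 1).
Proof.
move=> Ha Hn.
have Hub : 2 * eul n (3 * a + 1) <= 2 * (3 * a + 2) ^ n.
  by rewrite leq_mul2l /= (_ : 3 * a + 2 = (3 * a + 1).+1) ?eul_ub //; lia.
case: (eqVneq a 2) => [Ea|Na].
  subst a.
  case: (ltnP n 10) => Hn10.
    have : (n == 8) || (n == 9) by lia.
    by case/orP => /eqP ->; [exact: a2_8 | exact: a2_9].
  apply: leq_ltn_trans Hub _.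
  have := induct (n - 10) (isT : 2 <= 2) a2_10.
  by rewrite subnK.
apply: leq_ltn_trans Hub _.
have Hb : 2 * (3 * a + 2) ^ (3 * a + 2) < eul (3 * a + 2) a * (eul (3 * a + 2) a - 1).
  case: (leqP a 29) => Ha79.
    apply: mid_cases => //. lia.
  apply: large_base. lia.
have := induct (n - (3 * a + 2)) Ha Hb.
by rewrite subnK.
Qed.

Theorem mainTheorem20 (n r : nat) :
  3 <= r -> r <= n - 2 ->
  eulerian n (r - 1) * (eulerian n (r - 1) - 1) > 2 * eulerian n (3 * r - 2).
Proof.
move=> Hr Hn.
rewrite !eulerian_eul.
have -> : 3 * r - 2 = 3 * (r - 1) + 1 by lia.
set a := r - 1.
have Ha : 2 <= a by rewrite /a; lia.
have Hna : a + 3 <= n by rewrite /a; lia.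
case: (leqP (3 * a + 2) n) => Hn2; first exact: key.
rewrite eul_ge; [|lia|lia].
rewrite muln0 muln_gt0.
have HX : 9 <= eul n a.
  have := eul_pow_lb a.+1 (n - a.+1) a.
  rewrite eul_sub1 muln1 subnK; last by lia.
  apply: leq_trans.
  apply: (@leq_trans (a.+1 ^ 2)); first by rewrite (_ : 9 = 3 ^ 2) // leq_exp2r //; lia.
  rewrite leq_exp2l //; lia.
apply/andP; split; lia.
Qed.
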